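(* For every instance of 2NC-TAP, every extreme point $x$ of the feasible region of the partition LP $(P)$ satisfies $0\le x_\ell\le 1$ for every link $\ell\in L(G)$; that is, all extreme points of $(P)$ lie in $[0,1]^{L(G)}$.
   Context: An instance of 2NC-TAP consists of a simple undirected graph $G=(V,E)$ with $|V|\ge 3$, a spanning tree $T\subseteq E$ of $G$ (whose edges have cost $0$), and nonnegative costs $\mathrm{cost}(\ell)$ on the links, i.e. the edges of $L(G):=E\setminus T$. Let $N(T)$ denote the set of non-leaf nodes of $T$. For $u\in N(T)$, let $\pi_u$ be the partition of $V\setminus\{u\}$ into the vertex sets of the connected components of $T-u$, and let $\Pi_u$ be the set of all partitions $\mathcal P$ of $V\setminus\{u\}$ such that every set of $\pi_u$ is contained in some set of $\mathcal P$. A link $\ell$ crosses $\mathcal P\in\Pi_u$ if neither end node of $\ell$ is $u$ and the two end nodes of $\ell$ lie in different sets of $\mathcal P$. The partition LP $(P)$ has a variable $x_\ell$ for each link and reads: minimize $\sum_{\ell\in L(G)}\mathrm{cost}(\ell)x_\ell$ subject to $\sum_{\ell \text{ crosses } \mathcal P} x_\ell\ge |\mathcal P|-1$ for all $u\in N(T)$ and all $\mathcal P\in\Pi_u$, and $x_\ell\ge 0$ for all $\ell\in L(G)$. *)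

(* Defs.v *)
From mathcomp Require Import all_boot all_order all_algebra.
Set Implicit Arguments. Unset Strict Implicit. Unset Printing Implicit Defensive.
Import Order.TTheory GRing.Theory Num.Theory.
Local Open Scope ring_scope.

Section TwoNCTAP.
Variable V : finType.

Definition simple_graph (E : {set {set V}}) : bool :=
  [forall e in E, #|e| == 2]%N.

Definition adj (F : {set {set V}}) : rel V := fun a b => [set a; b] \in F.

Definition spanning_tree (T : {set {set V}}) : Prop :=
  [/\ forall e, e \in T -> #|e| = 2%N,
      forall a b : V, connect (adj T) a b
    & #|T| = #|V|.-1 ].

Definition links (E T : {set {set V}}) : {set {set V}} := E :\: T.

Definition nonleaf (T : {set {set V}}) (u : V) : bool :=
  (2 <= #|[set e in T | u \in e]|)%N.

Definition adj_minus (T : {set {set V}}) (u : V) : rel V :=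
  fun a b => [&& a != u, b != u & [set a; b] \in T].

Definition in_Pi (T : {set {set V}}) (u : V) (P : {set {set V}}) : Prop :=
  partition P [set~ u] /\
  forall a b : V, a != u -> b != u -> connect (adj_minus T u) a b ->
    pblock P a = pblock P b.

Definition crosses (u : V) (P : {set {set V}}) (l : {set V}) : bool :=
  [&& u \notin l &
      [exists a, exists b, [&& l == [set a; b], a != b & pblock P a != pblock P b]]].

Definition link_t (L : {set {set V}}) := {l : {set V} | l \in L}.

Variable R : realFieldType.

Definition feasibleP (E T : {set {set V}}) (x : link_t (links E T) -> R) : Prop :=
  (forall l, 0 <= x l) /\
  forall u : V, nonleaf T u -> forall P : {set {set V}}, in_Pi T u P ->
    \sum_(l : link_t (links E T) | crosses u P (val l)) x l >= (#|P|%:R - 1).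

Definition extreme_pointP (E T : {set {set V}}) (x : link_t (links E T) -> R) : Prop :=
  feasibleP x /\
  forall (y z : link_t (links E T) -> R) (lam : R),
    feasibleP y -> feasibleP z -> 0 < lam < 1 ->
    (forall l, x l = lam * y l + (1 - lam) * z l) ->
    forall l, y l = z l.

End TwoNCTAP.

(* Main.v *)
Require Import Defs.
From mathcomp Require Import all_boot all_order all_algebra.
From mathcomp Require Import ring lra.
Import Order.TTheory GRing.Theory Num.Theory.
Set Implicit Arguments. Unset Strict Implicit. Unset Printing Implicit Defensive.

Section M.
Variable V : finType.
Variables (P : {set {set V}}) (D : {set V}) (a b : V).
Hypothesis hP : partition P D.
Hypothesis ha : a \in D.
Hypothesis hb : b \in D.
Hypothesis hab : pblock P a != pblock P b.

Let A := pblock P a.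
Let B := pblock P b.
Definition mergeP := (A :|: B) |: ((P :\ A) :\ B).
Definition gP (X : {set V}) := if (X == A) || (X == B) then A :|: B else X.

Lemma merge_facts :
  [/\ partition mergeP D, #|mergeP|.+1 = #|P| &
      forall x, x \in D -> pblock mergeP x = gP (pblock P x)].
Proof.
case/and3P: hP => /eqP covP tP n0P.
have cov x : x \in D -> x \in cover P by rewrite covP.
have AP : A \in P by apply: pblock_mem; apply: cov.
have BP : B \in P by apply: pblock_mem; apply: cov.
have aA : a \in A by rewrite mem_pblock cov.
have bB : b \in B by rewrite mem_pblock cov.
have inM X : (X \in mergeP) = (X == A :|: B) || [&& X != B, X != A & X \in P].
  by rewrite !inE.
have disjP X Y : X \in P -> Y \in P -> X != Y -> [disjoint X & Y].
  by move=> HX HY; move/trivIsetP: tP; apply.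
have tM : trivIset mergeP.
  apply/trivIsetP => X Y; rewrite !inM.
  have dU Z : [&& Z != B, Z != A & Z \in P] -> [disjoint A :|: B & Z].
    case/and3P=> ZB ZA ZP.
    have dA := disjP _ _ AP ZP ltac:(by rewrite eq_sym).
    have dB := disjP _ _ BP ZP ltac:(by rewrite eq_sym).
    by rewrite disjoints_subset subUset -!disjoints_subset dA dB.
  case/orP=> [/eqP-> | HX]; case/orP=> [/eqP-> | HY] //; first by rewrite eqxx.
  - by move=> _; apply: dU.
  - by move=> _; rewrite disjoint_sym; apply: dU.
  - case/and3P: HX => _ _ XP; case/and3P: HY => _ _ YP.
    by apply: disjP.
have ABnP : (A :|: B \in P) = false.
  apply/negP => ABP.
  have : pblock P a = A :|: B by apply: def_pblock; rewrite // inE aA.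
  have : pblock P b = A :|: B by apply: def_pblock; rewrite // inE bB orbT.
  move=> e1 e2; move: hab; by rewrite e1 e2 eqxx.
have pbM x : x \in D -> pblock mergeP x = gP (pblock P x).
  move=> xD; rewrite /gP.
  have xX : x \in pblock P x by rewrite mem_pblock cov.
  case: ifP => [/orP[/eqP e|/eqP e] | /norP[nA nB]].
  - apply: def_pblock => //; first by rewrite inM eqxx.
    by rewrite inE -e xX.
  - apply: def_pblock => //; first by rewrite inM eqxx.
    by rewrite inE -e xX orbT.
  - apply: def_pblock => //.
    by rewrite inM nA nB pblock_mem ?cov ?orbT.
split => //.
- rewrite /partition tM /=; apply/andP; split.
  + apply/eqP/setP => x; rewrite -covP; apply/bigcupP/bigcupP.
    * case=> X; rewrite inM; case/orP => [/eqP-> | /and3P[_ _ XP] xX].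
        by rewrite inE => /orP[xA|xB]; [exists A | exists B].
      by exists X.
    * case=> X XP xX.
      have [e|nA] := eqVneq X A.
        by exists (A :|: B); rewrite ?inM ?eqxx // inE -e xX.
      have [e|nB] := eqVneq X B.
        by exists (A :|: B); rewrite ?inM ?eqxx // inE -e xX orbT.
      by exists X; rewrite // inM nA nB XP orbT.
  + rewrite inM negb_or; apply/andP; split.
      apply/eqP => /setP/(_ a); by rewrite !inE aA.
    apply/negP => /and3P[_ _ h]; by rewrite h in n0P.
- rewrite /mergeP cardsU1.
  have -> : (A :|: B \notin (P :\ A) :\ B) by rewrite !inE ABnP !andbF.
  rewrite (cardsD1 A P) AP (cardsD1 B (P :\ A)) !inE BP eq_sym hab.
  by [].
Qed.
End M.

Local Open Scope ring_scope.

Lemma sum_sub (R : realFieldType) (I : finType) (Q Q' : pred I) (f : I -> R) :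
  (forall i, 0 <= f i) -> (forall i, Q' i -> Q i) ->
  \sum_(i | Q' i) f i <= \sum_(i | Q i) f i.
Proof.
move=> f0 sQ; rewrite [X in X <= _]big_mkcond [X in _ <= X]big_mkcond /=.
apply: ler_sum => i _; case: ifP => [/sQ -> //|_]; by case: ifP.
Qed.

Theorem mainTheorem1 (R : realFieldType) (V : finType)
  (E T : {set {set V}}) (cost : link_t (links E T) -> R)
  (hV : (3 <= #|V|)%N) (hE : simple_graph E) (hTE : T \subset E)
  (hT : spanning_tree T) (hcost : forall l, 0 <= cost l)
  (x : link_t (links E T) -> R) :
  extreme_pointP x -> forall l, 0 <= x l <= 1.
Proof.
move=> [[x0 hx] hext] l0.
rewrite x0 /= leNgt; apply/negP => h1.
pose y l := if l == l0 then 2 * x l0 - 1 else x l.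
pose z l := if l == l0 then 1 else x l.
have fy : feasibleP y.
  have xy l : x l <= y l.
    rewrite /y; case: eqP => [->|_] //; lra.
  split=> [l|u nu P hP]; first exact: le_trans (x0 l) (xy l).
  apply: le_trans (hx u nu P hP) _; apply: ler_sum => l _; exact: xy.
have fz : feasibleP z.
  split=> [l|u nu P hP]; first by rewrite /z; case: eqP => // _; exact: ler01.
  case cr: (crosses u P (val l0)); last first.
    apply: le_trans (hx u nu P hP) _; rewrite le_eqVlt; apply/orP; left.
    apply/eqP; apply: eq_bigr => l cl; rewrite /z; case: eqP => // e.
    by rewrite e cr in cl.
  move: (cr); case/andP => ul0 /existsP[c /existsP[d /and3P[/eqP el0 cd pcd]]].
  have cu : c \in [set~ u].
    rewrite !inE; apply: contraNneq ul0 => <-; by rewrite el0 !inE eqxx.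
  have du : d \in [set~ u].
    rewrite !inE; apply: contraNneq ul0 => <-; by rewrite el0 !inE eqxx orbT.
  case: hP => partP conP.
  have [partM cardM pbM] := merge_facts partP cu du pcd.
  set P' := mergeP P c d in partM cardM pbM.
  have hP' : in_Pi T u P'.
    split => // a' b' au bu ab.
    rewrite !pbM ?inE ?au ?bu //; congr gP; exact: conP.
  have key l : crosses u P' (val l) -> crosses u P (val l) && (l != l0).
    case/andP => ul /existsP[c' /existsP[d' /and3P[/eqP el cd' pcd']]].
    have c'u : c' \in [set~ u].
      rewrite !inE; apply: contraNneq ul => <-; by rewrite el !inE eqxx.
    have d'u : d' \in [set~ u].
      rewrite !inE; apply: contraNneq ul => <-; by rewrite el !inE eqxx orbT.
    move: pcd'; rewrite !pbM // => pcd'.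
    apply/andP; split.
      rewrite /crosses ul /=; apply/existsP; exists c'; apply/existsP; exists d'.
      rewrite el eqxx cd' /=; apply: contraNneq pcd' => ->; done.
    apply: contraNneq pcd' => e.
    have hc : c' \in [set c; d] by rewrite -el0 -e el !inE eqxx.
    have hd : d' \in [set c; d] by rewrite -el0 -e el !inE eqxx orbT.
    rewrite /gP.
    move: hc hd; rewrite !inE => /orP[/eqP->|/eqP->] /orP[/eqP->|/eqP->];
      by rewrite !eqxx ?orbT.
  have h2 := hx u nu P' hP'.
  rewrite (bigD1 l0) //= {1}/z eqxx.
  have -> : \sum_(i | crosses u P (val i) && (i != l0)) z i =
            \sum_(i | crosses u P (val i) && (i != l0)) x i.
    by apply: eq_bigr => i /andP[_ /negbTE ne]; rewrite /z ne.
  have h3 := sum_sub x0 key.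
  rewrite -cardM -addn1 natrD addrK.
  lra.
have eqx : forall l, x l = 2^-1 * y l + (1 - 2^-1) * z l.
  move=> l; rewrite /y /z; case: eqP => [->|_]; by field.
have lam : 0 < (2^-1 : R) < 1.
  apply/andP; split; first by rewrite invr_gt0 ltr0n.
  by rewrite invf_lt1 ?ltr0n // ltr1n.
have := hext y z 2^-1 fy fz lam eqx l0.
rewrite /y /z eqxx => e.
lra.
Qed.
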